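(* Let $X$ be a set and $\beta_P\in\Im(P(X))$. Then there exists a fuzzifying topology $T\in\Im(P(X))$ on $X$ such that $\beta_P$ is a pre-base of $T$ if and only if the following two conditions hold: (1) $\beta_P^{(\cup)}(X)=1$, where $\beta_P^{(\cup)}(A)=\bigvee\{\bigwedge_{\lambda\in\Lambda}\beta_P(B_\lambda):\bigcup_{\lambda\in\Lambda}B_\lambda=A\}$; (2) for all $A,B\subseteq X$ and all $x\in A\cap B$, $\min(\beta_P(A),\beta_P(B))\le\sup\{\beta_P(C): x\in C\subseteq A\cap B\}$.
   Context: $\Im(Y)$ denotes the fuzzy subsets $Y\to[0,1]$ and $P(X)$ the power set. A fuzzifying topology on $X$ is $T\in\Im(P(X))$ with $T(X)=1$, $T(A\cap B)\ge\min(T(A),T(B))$ and $T(\bigcup_\lambda A_\lambda)\ge\inf_\lambda T(A_\lambda)$ for arbitrary families. Here $\beta_P$ is called a pre-base of $T$ if $\beta_P(A)\le T(A)$ for all $A$ and, for all $x\in X$ and $A\subseteq X$, $\sup_{x\in B\subseteq A}T(B)\le\sup_{x\in B\subseteq A}\beta_P(B)$. (Condition (2) is the Łukasiewicz-valid formula $\vDash (A\in\beta_P)\wedge(B\in\beta_P)\wedge(x\in A\cap B)\to\exists C((C\in\beta_P)\wedge(x\in C\subseteq A\cap B))$, where $[\varphi\wedge\psi]=\min$, $[\exists]=\sup$, $[\varphi\to\psi]=\min(1,1-[\varphi]+[\psi])$ and $\vDash$ means truth value $1$.) *)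

(* Defs.v *)
From HB Require Import structures.
From mathcomp Require Import all_boot all_order all_algebra.
From mathcomp Require Import boolp classical_sets reals.
Set Implicit Arguments. Unset Strict Implicit. Unset Printing Implicit Defensive.
Import Order.TTheory GRing.Theory Num.Theory.
Local Open Scope classical_set_scope.
Local Open Scope ring_scope.

Section Fuzzy.
Variable R : realType.

Definition fuzzy_set (Y : Type) (f : Y -> R) : Prop :=
  forall y, 0 <= f y <= 1.

(* Supremum / infimum in the complete lattice [0,1] (sup of empty = 0,
   inf of empty = 1), for subsets S of [0,1]. *)
Definition sup01 (S : set R) : R := sup (S `|` [set 0]).
Definition inf01 (S : set R) : R := inf (S `|` [set 1]).

Variable X : Type.

Definition fuzzifying_topology (T : set X -> R) : Prop :=
  [/\ fuzzy_set T,
      T setT = 1,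
      (forall A B : set X, T (A `&` B) >= Order.min (T A) (T B)) &
      (forall (I : Type) (F : I -> set X),
          T (\bigcup_(i in [set: I]) F i) >= inf01 [set T (F i) | i in [set: I]])].

Definition prebase (beta T : set X -> R) : Prop :=
  (forall A, beta A <= T A) /\
  (forall (x : X) (A : set X),
      sup01 [set T B | B in [set B | B x /\ B `<=` A]]
      <= sup01 [set beta B | B in [set B | B x /\ B `<=` A]]).

Definition beta_union (beta : set X -> R) (A : set X) : R :=
  sup01 [set r | exists (I : Type) (F : I -> set X),
           \bigcup_(i in [set: I]) F i = A /\
           r = inf01 [set beta (F i) | i in [set: I]]].

Definition prebase_cond2 (beta : set X -> R) : Prop :=
  forall (A B : set X) (x : X), (A `&` B) x ->
    Order.min (beta A) (beta B)
    <= sup01 [set beta C | C in [set C | C x /\ C `<=` A `&` B]].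

End Fuzzy.

(* Main.v *)
Require Import Defs.
From mathcomp Require Import all_boot all_order all_algebra.
From mathcomp Require Import boolp classical_sets reals.
Set Implicit Arguments. Unset Strict Implicit. Unset Printing Implicit Defensive.
Import Order.TTheory GRing.Theory Num.Theory.
Local Open Scope classical_set_scope.
Local Open Scope ring_scope.

Section H.
Variable R : realType.
Implicit Types (S : set R) (a r : R).

Lemma sup01_ub S r : (forall s, S s -> s <= 1) -> S r -> r <= sup01 S.
Proof.
move=> hS Sr; apply: ub_le_sup; last by left.
by exists 1 => s [/hS|->].
Qed.

Lemma sup01_le S a : (forall s, S s -> s <= a) -> 0 <= a -> sup01 S <= a.
Proof.
move=> hS a0; apply: ge_sup; first by exists 0; right.
by move=> s [/hS|->].
Qed.

Lemma sup01_ge0 S : (forall s, S s -> s <= 1) -> 0 <= sup01 S.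
Proof. move=> hS; apply: ub_le_sup; [by exists 1 => s [/hS|->]|by right]. Qed.

Lemma sup01_gt S a : 0 <= a -> a < sup01 S -> exists2 r, S r & a < r.
Proof.
move=> a0 /sup_gt [|r [Sr|->] ar]; first by exists 0; right.
  by exists r.
by move: (le_lt_trans a0 ar); rewrite ltxx.
Qed.

Lemma inf01_lb S r : (forall s, S s -> 0 <= s) -> S r -> inf01 S <= r.
Proof.
move=> hS Sr; apply: ge_inf; last by left.
by exists 0 => s [/hS|->].
Qed.

Lemma inf01_le1 S : (forall s, S s -> 0 <= s) -> inf01 S <= 1.
Proof. move=> hS; apply: ge_inf; [by exists 0 => s [/hS|->]|by right]. Qed.

Lemma inf01_ge S a : (forall s, S s -> a <= s) -> a <= 1 -> a <= inf01 S.
Proof.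
move=> hS a1; apply: lb_le_inf; first by exists 1; right.
by move=> s [/hS|->].
Qed.

Lemma le_lt1 (x y : R) : (forall a, a < x -> a <= y) -> x <= y.
Proof.
move=> h; rewrite leNgt; apply/negP => yx.
have := h ((y + x) / 2%:R) (midf_lt yx).2.
by rewrite leNgt (midf_lt yx).1.
Qed.

End H.

Section Main.
Variables (R : realType) (X : Type) (beta : set X -> R).
Hypothesis hb : fuzzy_set beta.

Lemma b_ge0 C : 0 <= beta C. Proof. by case/andP: (hb C). Qed.
Lemma b_le1 C : beta C <= 1. Proof. by case/andP: (hb C). Qed.

Definition Nb (A : set X) (x : X) :=
  sup01 [set beta C | C in [set C | C x /\ C `<=` A]].

Lemma Nb_bnd A x : forall s, [set beta C | C in [set C | C x /\ C `<=` A]] s -> s <= 1.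
Proof. by move=> s [C _ <-]; apply: b_le1. Qed.

Lemma Nb_ub A x C : C x -> C `<=` A -> beta C <= Nb A x.
Proof. by move=> Cx CA; apply: sup01_ub; [apply: Nb_bnd| exists C]. Qed.

Lemma Nb_ge0 A x : 0 <= Nb A x.
Proof. exact/sup01_ge0/Nb_bnd. Qed.

Lemma Nb_le1 A x : Nb A x <= 1.
Proof. by apply: sup01_le => //; apply: Nb_bnd. Qed.

Lemma Nb_mono A A' x : A `<=` A' -> Nb A x <= Nb A' x.
Proof.
move=> AA'; apply: sup01_le; last exact: Nb_ge0.
by move=> s [C [Cx CA] <-]; apply: Nb_ub => // y /CA /AA'.
Qed.

Definition Tt (A : set X) := inf01 [set Nb A x | x in A].

Lemma Tt_bnd A : forall s, [set Nb A x | x in A] s -> 0 <= s.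
Proof. by move=> s [x _ <-]; apply: Nb_ge0. Qed.

Lemma Tt_ge0 A : 0 <= Tt A.
Proof. by apply: inf01_ge => //; apply: Tt_bnd. Qed.

Lemma Tt_le1 A : Tt A <= 1.
Proof. exact/inf01_le1/Tt_bnd. Qed.

Lemma Tt_lb A x : A x -> Tt A <= Nb A x.
Proof. by move=> Ax; apply: inf01_lb; [apply: Tt_bnd|exists x]. Qed.


Lemma Tt_fuzzy : fuzzy_set Tt.
Proof. by move=> A; rewrite Tt_ge0 Tt_le1. Qed.

Lemma conv_top : beta_union beta setT = 1 -> prebase_cond2 beta ->
  fuzzifying_topology Tt.
Proof.
move=> H1 H2; split.
- exact: Tt_fuzzy.
- apply/le_anti; rewrite Tt_le1 /=; apply: le_lt1 => a a1.
  case: (leP 0 a) => a0; last exact: le_trans (ltW a0) (Tt_ge0 _).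
  apply: inf01_ge; last exact: ltW.
  move=> s [x _ <-]; rewrite -H1 in a1.
  have [r [I [F [UF ->]]] ar] := sup01_gt a0 a1.
  have : (\bigcup_(i in [set: I]) F i) x by rewrite UF.
  case=> i _ Fix; apply: (le_trans (ltW ar)).
  apply: (le_trans (inf01_lb _ _)) ; last exact: Nb_ub Fix (@subsetT _ _).
    by move=> t [j _ <-]; apply: b_ge0.
  by exists i.
- move=> A B; apply: inf01_ge; last by rewrite ge_min Tt_le1.
  move=> s [x ABx <-]; apply: le_lt1 => a am.
  case: (leP 0 a) => a0; last exact: le_trans (ltW a0) (Nb_ge0 _ _).
  move: am; rewrite lt_min => /andP[aA aB].
  have [_ [C1 [C1x C1A] <-] h1] := sup01_gt a0 (lt_le_trans aA (Tt_lb ABx.1)).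
  have [_ [C2 [C2x C2B] <-] h2] := sup01_gt a0 (lt_le_trans aB (Tt_lb ABx.2)).
  have := H2 C1 C2 x (conj C1x C2x); rewrite -/(Nb _ _) => h.
  apply: (le_trans (ltW (lt_le_trans _ h))); first by rewrite lt_min h1 h2.
  by apply: Nb_mono => y [/C1A ? /C2B ?].
- move=> I F; apply: inf01_ge; last by apply: inf01_le1 => t [k _ <-]; apply: Tt_ge0.
  move=> s [x [j _ Fjx] <-].
  apply: (le_trans (inf01_lb _ _)); [|by exists j|].
    by move=> t [k _ <-]; apply: Tt_ge0.
  apply: (le_trans (Tt_lb Fjx)); apply: Nb_mono => y Fy; by exists j.
Qed.

Lemma conv_pre : prebase beta Tt.
Proof.
split.
- move=> A; apply: inf01_ge; last exact: b_le1.
  by move=> s [x Ax <-]; apply: Nb_ub.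
- move=> x A; apply: sup01_le; last exact: Nb_ge0.
  move=> s [B [Bx BA] <-]; exact: le_trans (Tt_lb Bx) (Nb_mono _ BA).
Qed.

Lemma bu_bnd : forall s, [set r | exists (I : Type) (F : I -> set X),
           \bigcup_(i in [set: I]) F i = setT /\
           r = inf01 [set beta (F i) | i in [set: I]]] s -> s <= 1.
Proof. by move=> s [I [F [_ ->]]]; apply: inf01_le1 => t [i _ <-]; apply: b_ge0. Qed.

Lemma forward T : fuzzifying_topology T -> prebase beta T ->
  beta_union beta setT = 1 /\ prebase_cond2 beta.
Proof.
case=> Tf TX Tmin _ [p1 p2].
have T1 B : T B <= 1 by case/andP: (Tf B).
split.
- apply/le_anti; rewrite sup01_le //=; last exact: bu_bnd.
  apply: le_lt1 => a a1.
  case: (leP 0 a) => a0; last exact: le_trans (ltW a0) (sup01_ge0 bu_bnd).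
  pose I := {B : set X | exists x, B x /\ a < beta B}.
  pose F := fun i : I => proj1_sig i.
  apply: (@le_trans _ _ (inf01 [set beta (F i) | i in [set: I]])).
    apply: inf01_ge; last exact: ltW.
    move=> s [i _ <-]; case: i => B [y [_ h]] /=; exact: ltW.
  apply: sup01_ub; first exact: bu_bnd.
    exists I, F; split; last by [].
    apply/seteqP; split => // x _.
    have h : a < sup01 [set beta B | B in [set B | B x /\ B `<=` setT]].
      have hT : T setT <= sup01 [set T B | B in [set B | B x /\ B `<=` setT]].
        by apply: sup01_ub; [move=> s [B _ <-]; apply: T1 | exists setT].
      by apply: lt_le_trans (p2 x setT); apply: lt_le_trans hT; rewrite TX.
    have [_ [B [Bx _] <-] aB] := sup01_gt a0 h.
    by exists (exist _ B (ex_intro _ x (conj Bx aB))).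
- move=> A B x ABx.
  have h1 : Order.min (beta A) (beta B) <= Order.min (T A) (T B).
    by rewrite le_min !ge_min !p1 orbT.
  apply: (le_trans h1); apply: (le_trans (Tmin A B)).
  apply: le_trans (p2 x (A `&` B)); apply: sup01_ub.
    by move=> s [C _ <-]; apply: T1.
  by exists (A `&` B) => //; split.
Qed.

End Main.

Theorem theorem2p2 (R : realType) (X : Type) (beta : set X -> R) :
  fuzzy_set beta ->
  ((exists T : set X -> R, fuzzifying_topology T /\ prebase beta T) <->
   (beta_union beta setT = 1 /\ prebase_cond2 beta)).
Proof.
move=> hb; split.
  by case=> T [hT pT]; apply: forward hT pT.
case=> H1 H2; exists (Tt beta); split; [exact: conv_top|exact: conv_pre].
Qed.
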